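(* The edge set of the complete graph $K_{16}$ can be partitioned into five subgraphs each isomorphic to $P_4 \square P_4$.
   Context: $P_n$ denotes the path graph on $n$ vertices and $K_m$ the complete graph on $m$ vertices. For graphs $G=(V,E)$ and $G'=(V',E')$, the Cartesian product $G \square G'$ has vertex set $V\times V'$, with $\{(v,v'),(w,w')\}$ an edge iff either $\{v,w\}\in E$ and $v'=w'$, or $v=w$ and $\{v',w'\}\in E'$. Thus $P_4\square P_4$ is the $4\times 4$ grid graph with 16 vertices and 24 edges. *)

(* Defs.v *)
From mathcomp Require Import all_boot.
Set Implicit Arguments. Unset Strict Implicit. Unset Printing Implicit Defensive.

Definition path_adj (n : nat) : rel 'I_n :=
  fun i j => (i.+1 == j) || (j.+1 == i).

Definition cart_adj (T U : finType) (e : rel T) (e' : rel U) : rel (T * U) :=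
  fun x y => (e x.1 y.1 && (x.2 == y.2)) || ((x.1 == y.1) && e' x.2 y.2).

Definition grid_adj : rel ('I_4 * 'I_4) := cart_adj (@path_adj 4) (@path_adj 4).

Definition edge_set (V : finType) (e : rel V) : {set {set V}} :=
  [set [set x; y] | x in V, y in V & e x y].

Definition K_edges (m : nat) : {set {set 'I_m}} :=
  [set [set x; y] | x in 'I_m, y in 'I_m & x != y].

Definition iso_to_grid (E : {set {set 'I_16}}) : Prop :=
  exists f : 'I_4 * 'I_4 -> 'I_16,
    injective f /\ E = [set f @: A | A : {set 'I_4 * 'I_4} in edge_set grid_adj].

(* Main.v *)
Require Import Defs.
From mathcomp Require Import all_boot.
Set Implicit Arguments. Unset Strict Implicit. Unset Printing Implicit Defensive.

(* Five embeddings of the 4x4 grid into K_16; copy k is copy 0 rotated k times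
   by the permutation fixing 0 and cycling 1..5, 6..10, 11..15. *)
Definition FT : seq nat := [:: 5; 14; 9; 7; 13; 2; 3; 6; 10; 12; 8; 4; 11; 15; 0; 1; 1; 15; 10; 8; 14; 3; 4; 7; 6; 13; 9; 5; 12; 11; 0; 2; 2; 11; 6; 9; 15; 4; 5; 8; 7; 14; 10; 1; 13; 12; 0; 3; 3; 12; 7; 10; 11; 5; 1; 9; 8; 15; 6; 2; 14; 13; 0; 4; 4; 13; 8; 6; 12; 1; 2; 10; 9; 11; 7; 3; 15; 14; 0; 5].
Definition fn (k i j : nat) : nat := nth 0 FT (16 * k + 4 * i + j).
Definition gadjn (i j i' j' : nat) : bool :=
  (((i.+1 == i') || (i'.+1 == i)) && (j == j')) || ((i == i') && ((j.+1 == j') || (j'.+1 == j))).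

Definition fk (k : 'I_5) (p : 'I_4 * 'I_4) : 'I_16 := inord (fn k p.1 p.2).
Definition G (k : 'I_5) : {set {set 'I_16}} :=
  [set fk k @: A | A : {set 'I_4 * 'I_4} in edge_set grid_adj].

Definition I n := iota 0 n.

Lemma bound_check : all (fun k => all (fun i => all (fun j => fn k i j < 16) (I 4)) (I 4)) (I 5).
Proof. by vm_compute. Qed.

Lemma inj_check : all (fun k => all (fun i => all (fun j => all (fun i' => all (fun j' =>
  if fn k i j == fn k i' j' then (i == i') && (j == j') else true) (I 4)) (I 4)) (I 4)) (I 4)) (I 5).
Proof. by vm_compute. Qed.

Lemma edge_check : all (fun k => all (fun i => all (fun j => all (fun i' => all (fun j' =>
  if gadjn i j i' j' then fn k i j != fn k i' j' else true) (I 4)) (I 4)) (I 4)) (I 4)) (I 5).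
Proof. by vm_compute. Qed.

Lemma disj_check : all (fun k => all (fun l => if k != l then
  all (fun i => all (fun j => all (fun i' => all (fun j' => if gadjn i j i' j' then
  all (fun c => all (fun d => all (fun c' => all (fun d' => if gadjn c d c' d' then
  ~~ (((fn k i j == fn l c d) || (fn k i j == fn l c' d')) &&
      ((fn k i' j' == fn l c d) || (fn k i' j' == fn l c' d'))) else true)
  (I 4)) (I 4)) (I 4)) (I 4) else true) (I 4)) (I 4)) (I 4)) (I 4) else true) (I 5)) (I 5).
Proof. by vm_compute. Qed.

Lemma cover_check : all (fun x => all (fun y => if x != y then
  has (fun k => has (fun i => has (fun j => has (fun i' => has (fun j' =>
   gadjn i j i' j' && (fn k i j == x) && (fn k i' j' == y)) (I 4)) (I 4)) (I 4)) (I 4)) (I 5) else true)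
  (I 16)) (I 16).
Proof. by vm_compute. Qed.

Lemma allI n (P : nat -> bool) : all P (I n) -> forall x : 'I_n, P x.
Proof. by move=> /allP H x; apply: H; rewrite mem_iota ltn_ord. Qed.

Lemma hasI n (P : nat -> bool) : has P (I n) -> exists x : 'I_n, P x.
Proof.
move=> /hasP [x]; rewrite mem_iota add0n => hx Px.
by exists (Ordinal hx).
Qed.

Lemma val_fk k p : nat_of_ord (fk k p) = fn k p.1 p.2.
Proof.
rewrite /fk inordK //.
exact: (allI (allI (allI bound_check k) p.1) p.2).
Qed.

Lemma grid_adjE (a b : 'I_4 * 'I_4) : grid_adj a b = gadjn a.1 a.2 b.1 b.2.
Proof. by []. Qed.

Lemma memG k e : e \in G k <-> exists a b, grid_adj a b /\ e = [set fk k a; fk k b].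
Proof.
split.
  case/imsetP=> A /imset2P [a b _]; rewrite inE => hab -> ->.
  by exists a, b; split => //; rewrite imsetU1 imset_set1.
case=> a [b [hab ->]]; apply/imsetP; exists [set a; b].
  by apply/imset2P; exists a b; rewrite ?inE.
by rewrite imsetU1 imset_set1.
Qed.

Lemma fk_inj k : injective (fk k).
Proof.
move=> [a1 a2] [b1 b2] /(congr1 (@nat_of_ord 16)); rewrite !val_fk /= => /eqP h.
have := allI (allI (allI (allI (allI inj_check k) a1) a2) b1) b2.
by rewrite h /= => /andP [/eqP/val_inj -> /eqP/val_inj ->].
Qed.

Theorem theorem4 :
  exists G : 'I_5 -> {set {set 'I_16}},
    (forall k, iso_to_grid (G k)) /\
    (forall k l, k != l -> [disjoint G k & G l]) /\
    \bigcup_(k < 5) G k = K_edges 16.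
Proof.
exists G; split; [|split].
- by move=> k; exists (fk k); split; [exact: fk_inj|].
- move=> k l kl; apply/pred0P => e /=; apply/negbTE/andP => -[/memG [a [b [hab ->]]] /memG [c [d [hcd heq]]]].
  have hab' : gadjn a.1 a.2 b.1 b.2 by rewrite -grid_adjE.
  have hcd' : gadjn c.1 c.2 d.1 d.2 by rewrite -grid_adjE.
  have := allI (allI disj_check k) l => /implyP/(_ kl) H.
  have := allI (allI (allI (allI H a.1) a.2) b.1) b.2 => /implyP/(_ hab') {}H.
  have := allI (allI (allI (allI H c.1) c.2) d.1) d.2 => /implyP/(_ hcd') {}H.
  move: H; rewrite -!val_fk.
  have : fk k a \in [set fk l c; fk l d] by rewrite -heq !inE eqxx.
  have : fk k b \in [set fk l c; fk l d] by rewrite -heq !inE eqxx orbT.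
  by rewrite !inE => -> ->.
- apply/setP => e; apply/bigcupP/idP.
  + case=> k _ /memG [a [b [hab ->]]]; apply/imset2P; exists (fk k a) (fk k b) => //.
    rewrite inE; apply/negP => /eqP /(congr1 (@nat_of_ord 16)); rewrite !val_fk => /eqP.
    have := allI (allI (allI (allI (allI edge_check k) a.1) a.2) b.1) b.2.
    by rewrite -grid_adjE hab /= => /negPf ->.
  + case/imset2P => x y _; rewrite inE => /andP [_ xy] ->.
    have := allI (allI cover_check x) y => /implyP/(_ xy).
    case/hasI => k /hasI [i] /hasI [j] /hasI [i'] /hasI [j'] /andP [/andP [h1 h2] h3].
    exists k => //; apply/memG; exists (i, j), (i', j'); split; first by rewrite grid_adjE.
    have e1 : fk k (i, j) = x by apply/ord_inj; rewrite val_fk /=; apply/eqP.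
    have e2 : fk k (i', j') = y by apply/ord_inj; rewrite val_fk /=; apply/eqP.
    by rewrite e1 e2.
Qed.
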